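(* Let $(A,\circ,[\cdot,\cdot])$ be a finite-dimensional dual pre-Poisson algebra. If there is a nondegenerate skew-symmetric invariant bilinear form $\mathcal{B}$ on $A$, then the representations $(A;L_\circ,R_\circ,L_{[\cdot,\cdot]},R_{[\cdot,\cdot]})$ and $(A^*;-L_\circ^*,-L_\circ^*+R_\circ^*,L_{[\cdot,\cdot]}^*,-L_{[\cdot,\cdot]}^*-R_{[\cdot,\cdot]}^* )$ of $(A,\circ,[\cdot,\cdot])$ are equivalent. Conversely, if these two representations are equivalent, then there exists a nondegenerate invariant bilinear form $\mathcal{B}$ on $A$.
   Context: Field $\mathbb{F}$ of characteristic $0$. A dual pre-Poisson algebra: $x\circ(y\circ z)=(x\circ y)\circ z=(y\circ x)\circ z$; $[x,[y,z]]=[[x,y],z]+[y,[x,z]]$; $[x,y\circ z]=[x,y]\circ z+y\circ[x,z]$; $[x\circ y,z]=x\circ[y,z]+y\circ[x,z]$; $[x,y]\circ z=-[y,x]\circ z$. $L_\diamond(x)y=x\diamond y$, $R_\diamond(x)y=y\diamond x$; for $f:A\to\mathrm{End}(A)$, $f^*:A\to\mathrm{End}(A^* )$ is $\langle f^*(x)a^*,y\rangle=-\langle a^*,f(x)y\rangle$. A bilinear form $\mathcal{B}$ on $A$ is invariant if $\mathcal{B}(x\circ y,z)=\mathcal{B}(x,y\circ z-z\circ y)$ and $\mathcal{B}([x,y],z)=\mathcal{B}(x,[y,z]+[z,y])$ for all $x,y,z$. Two representations $(V_1;l_1,r_1,l'_1,r'_1)$ and $(V_2;l_2,r_2,l'_2,r'_2)$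 (quadruples of linear maps $A\to\mathrm{End}(V_i)$ playing the roles of left/right actions of $\circ$ and of $[\cdot,\cdot]$) are equivalent if there is a linear isomorphism $\varphi:V_1\to V_2$ with $\varphi l_1(x)=l_2(x)\varphi$, $\varphi r_1(x)=r_2(x)\varphi$, $\varphi l'_1(x)=l'_2(x)\varphi$, $\varphi r'_1(x)=r'_2(x)\varphi$ for all $x\in A$. *)

(* Defs.v *)
From HB Require Import structures.
From mathcomp Require Import all_boot all_order all_algebra.
Set Implicit Arguments. Unset Strict Implicit. Unset Printing Implicit Defensive.
Import GRing.Theory.
Local Open Scope ring_scope.

Definition bilinear_op (F : fieldType) (A : vectType F) (op : A -> A -> A) :=
  (forall x, linear (op x)) /\ (forall y, linear (fun x => op x y)).

Definition dual_pre_poisson (F : fieldType) (A : vectType F)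
  (circ br : A -> A -> A) : Prop :=
  bilinear_op circ /\ bilinear_op br /\
  (forall x y z, circ x (circ y z) = circ (circ x y) z) /\
  (forall x y z, circ (circ x y) z = circ (circ y x) z) /\
  (forall x y z, br x (br y z) = br (br x y) z + br y (br x z)) /\
  (forall x y z, br x (circ y z) = circ (br x y) z + circ y (br x z)) /\
  (forall x y z, br (circ x y) z = circ x (br y z) + circ y (br x z)) /\
  (forall x y z, circ (br x y) z = - circ (br y x) z).

(* The dual space A^* is modelled as 'Hom(A, F^o), with pairing <a*, y> := a* y. *)

Definition Lop (F : fieldType) (A : vectType F) (op : A -> A -> A) (x : A) : A -> A :=
  fun y => op x y.
Definition Rop (F : fieldType) (A : vectType F) (op : A -> A -> A) (x : A) : A -> A :=
  fun y => op y x.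

Definition dualrep (F : fieldType) (A : vectType F) (f : A -> A -> A)
  (x : A) (a : 'Hom(A, F^o)) : 'Hom(A, F^o) :=
  linfun (fun y : A => - a (f x y) : F^o).

Definition rep_equiv (F : fieldType) (A V1 V2 : vectType F)
  (l1 r1 l1' r1' : A -> V1 -> V1) (l2 r2 l2' r2' : A -> V2 -> V2) : Prop :=
  exists phi : V1 -> V2,
    linear phi /\ bijective phi /\
    (forall x v, phi (l1 x v) = l2 x (phi v)) /\
    (forall x v, phi (r1 x v) = r2 x (phi v)) /\
    (forall x v, phi (l1' x v) = l2' x (phi v)) /\
    (forall x v, phi (r1' x v) = r2' x (phi v)).

Definition bilin_form (F : fieldType) (A : vectType F) (B : A -> A -> F) :=
  (forall x, linear (B x : A -> F^o)) /\ (forall y, linear ((fun x => B x y) : A -> F^o)).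

Definition nondeg_form (F : fieldType) (A : vectType F) (B : A -> A -> F) :=
  forall x, (forall y, B x y = 0) -> x = 0.

Definition skew_form (F : fieldType) (A : vectType F) (B : A -> A -> F) :=
  forall x y, B x y = - B y x.

Definition dpp_invariant_form (F : fieldType) (A : vectType F)
  (circ br : A -> A -> A) (B : A -> A -> F) :=
  (forall x y z, B (circ x y) z = B x (circ y z - circ z y)) /\
  (forall x y z, B (br x y) z = B x (br y z + br z y)).

Definition adjoint_rep_equiv (F : fieldType) (A : vectType F) (circ br : A -> A -> A) :=
  rep_equiv (V1 := A) (V2 := 'Hom(A, F^o))
    (Lop circ) (Rop circ) (Lop br) (Rop br)
    (fun x a => - dualrep (Lop circ) x a)
    (fun x a => - dualrep (Lop circ) x a + dualrep (Rop circ) x a)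
    (fun x a => dualrep (Lop br) x a)
    (fun x a => - dualrep (Lop br) x a - dualrep (Rop br) x a).

(* Main.v *)
Require Import Defs.
From HB Require Import structures.
From mathcomp Require Import all_boot all_order all_algebra.
Import GRing.Theory.
Local Open Scope ring_scope.

Set Implicit Arguments.
Section Helpers.
Variables (R : fieldType) (aT rT : vectType R).

Lemma linfunE' (f : aT -> rT) : linear f -> linfun f =1 f.
Proof. move=> Lf. pose g : {linear aT -> rT} := HB.pack f (GRing.isLinear.Build _ _ _ _ f Lf). exact: (lfunE g). Qed.

Lemma linB' (f : aT -> rT) : linear f -> forall u v, f (u - v) = f u - f v.
Proof. move=> Lf. pose g : {linear aT -> rT} := HB.pack f (GRing.isLinear.Build _ _ _ _ f Lf). exact: (raddfB g). Qed.

Lemma linD' (f : aT -> rT) : linear f -> forall u v, f (u + v) = f u + f v.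
Proof. move=> Lf. pose g : {linear aT -> rT} := HB.pack f (GRing.isLinear.Build _ _ _ _ f Lf). exact: (raddfD g). Qed.

Lemma linN' (f : aT -> rT) : linear f -> forall u, f (- u) = - f u.
Proof. move=> Lf. pose g : {linear aT -> rT} := HB.pack f (GRing.isLinear.Build _ _ _ _ f Lf). exact: (raddfN g). Qed.

Lemma lin0' (f : aT -> rT) : linear f -> f 0 = 0.
Proof. move=> Lf. pose g : {linear aT -> rT} := HB.pack f (GRing.isLinear.Build _ _ _ _ f Lf). exact: (raddf0 g). Qed.
End Helpers.

Lemma dimH (R : fieldType) (A : vectType R) : \dim {:'Hom(A, R^o)} = \dim {:A}.
Proof. by rewrite !dimvf /dim /= muln1. Qed.

Lemma dualrepE (F : fieldType) (A : vectType F) (f : A -> A -> A) x a y :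
  linear (f x) -> dualrep f x a y = - a (f x y).
Proof.
move=> Lf; rewrite /dualrep linfunE' //.
move=> k u v /=. rewrite Lf linearP /=. by rewrite opprD scalerN.
Qed.

Theorem proposition2p40 (F : fieldType) (A : vectType F) (circ br : A -> A -> A) :
  [pchar F] =i pred0 ->
  dual_pre_poisson circ br ->
  ((exists B : A -> A -> F,
       [/\ bilin_form B, nondeg_form B, skew_form B & dpp_invariant_form circ br B]) ->
     adjoint_rep_equiv circ br) /\
  (adjoint_rep_equiv circ br ->
     exists B : A -> A -> F,
       [/\ bilin_form B, nondeg_form B & dpp_invariant_form circ br B]).
Proof.
move=> _ [[Lc Rc] [[Lb Rb] _]].
split.
- move=> [B [[LB RB] nd sk [Ic Ib]]].
  pose phi0 := fun v : A => (linfun (B v : A -> F^o) : 'Hom(A, F^o)).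
  have phiE : forall v y, phi0 v y = B v y by move=> v y; rewrite /phi0 linfunE'.
  have Lphi : linear phi0.
    move=> k u v; apply/lfunP => y.
    by rewrite add_lfunE scale_lfunE !phiE (RB y).
  pose Phi := linfun phi0.
  have PhiE : forall v, Phi v = phi0 v by move=> v; rewrite /Phi linfunE'.
  have inj : injective phi0.
    move=> u v e; apply/eqP; rewrite -subr_eq0; apply/eqP; apply: nd => y.
    by rewrite (linB' (RB y)) -!phiE e subrr.
  have kerP : lker Phi == 0%VS.
    by apply/lker0P => u v; rewrite !PhiE; apply: inj.
  have imP : limg Phi = fullv.
    apply/eqP; rewrite eqEdim subvf /= limg_dim_eq ?dimH //.
    by rewrite (eqP kerP) capv0.
  exists phi0; split; first exact: Lphi.
  split.
    exists (fun w => (Phi^-1)%VF w).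
      by move=> v; rewrite -PhiE lker0_lfunK.
    by move=> w; rewrite -PhiE limg_lfunVK // imP memvf.
  split.
    move=> x v; apply/lfunP => y.
    rewrite opp_lfunE (@dualrepE _ _ (Lop circ) x _ _ (Lc x)) !phiE opprK /Lop (Ic x v y).
    by rewrite (sk v (circ x y)) (Ic x y v) -(linN' (LB x)) opprB.
  split.
    move=> x v; apply/lfunP => y.
    rewrite add_lfunE opp_lfunE (@dualrepE _ _ (Lop circ) x _ _ (Lc x)) (@dualrepE _ _ (Rop circ) x _ _ (Rc x)) !phiE opprK /Rop (Ic v x y).
    by rewrite (linB' (LB v)).
  split.
    move=> x v; apply/lfunP => y.
    rewrite (@dualrepE _ _ (Lop br) x _ _ (Lb x)) !phiE /Lop (Ib x v y).
    by rewrite (sk v (br x y)) opprK (Ib x y v) addrC.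
  move=> x v; apply/lfunP => y.
  rewrite add_lfunE !opp_lfunE (@dualrepE _ _ (Lop br) x _ _ (Lb x)) (@dualrepE _ _ (Rop br) x _ _ (Rb x)) !phiE !opprK /Rop (Ib v x y).
  by rewrite (linD' (LB v)).
- move=> [phi [Lphi [[g gK Kg] [hl [hr [hl' hr']]]]]].
  exists (fun x y => (phi x : 'Hom(A, F^o)) y : F).
  split.
  + split.
      by move=> x k u v /=; rewrite linearP.
    by move=> y k u v /=; rewrite Lphi add_lfunE scale_lfunE.
  + move=> x H.
    have phi0 : phi 0 = 0.
      by have := Lphi (-1) 0 0; rewrite scaleN1r addr0 oppr0 scaleN1r addNr.
    have : phi x = phi 0 by rewrite phi0; apply/lfunP => y; rewrite zero_lfunE H.
    by move/(can_inj gK).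
  + split.
      move=> x y z /=.
      have := hr y x; rewrite /Rop => ->.
      rewrite add_lfunE opp_lfunE (@dualrepE _ _ (Lop circ) y _ _ (Lc y)).
      rewrite (@dualrepE _ _ (Rop circ) y _ _ (Rc y)) opprK.
      by rewrite (linB' (linearP (phi x))).
    move=> x y z /=.
    have := hr' y x; rewrite /Rop => ->.
    rewrite add_lfunE !opp_lfunE (@dualrepE _ _ (Lop br) y _ _ (Lb y)).
    rewrite (@dualrepE _ _ (Rop br) y _ _ (Rb y)) !opprK.
    by rewrite (linD' (linearP (phi x))).
Qed.
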